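(* Under the hypotheses of the previous lemma (standing assumptions, SLC and BUC, each $B_k$ nonnegative doubly stochastic scrambling with nonzero entries at least a fixed $\kappa>0$), and assuming the step sizes satisfy $\alpha_k>0$, $\alpha_{k+1}\le\alpha_k$, $\sum_k\alpha_k=\infty$ and $\sum_k\alpha_k^2<\infty$, one has $$\sum_{k=0}^\infty\alpha_k\max_J\|\delta^J_k\|<\infty,$$ where $\delta^J_k=x^J_{0,k}-\frac1S\sum_{I=1}^S x^I_{0,k}$.
   Context: Standing setup. Integers $S\ge1$ (servers), $C\ge1$ (clients), $D\ge1$, $\Delta\ge1$. $\mathcal{X}\subseteq\mathbb{R}^D$ is a nonempty convex compact set and $\mathcal{P}_{\mathcal{X}}$ is Euclidean projection onto $\mathcal{X}$. For $h=1,\dots,C$, $f_h:\mathbb{R}^D\to\mathbb{R}$ is continuously differentiable and convex with gradient $g_h$; there are constants $L_h$ with $\|g_h(x)\|\le L_h$ for all $x\in\mathcal{X}$ and constants $N_h>0$ with $\|g_h(x)-g_h(y)\|\le N_h\|x-y\|$ for all $x,y\in\mathcal{X}$. Norms are Euclidean. Weight matrices $W_{i,k}\in\mathbb{R}^{S\times C}$ ($0\le i\le\Delta-1$, $k\ge0$), entries possibly negative. Symmetric Learning Condition (SLC): there is $M>0$ with $\sum_{i=1}^{\Delta}\sum_{J=1}^S W_{i-1,k}[J,h]=M$ for all $k\ge0$ and all $h$. Bounded Update Condition (BUC): there is $\bar M>0$ with $\sum_{i=1}^{\Delta}\sum_{J=1}^S |W_{i-1,k}[J,h]|\le\bar M$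 for all $k,h$. Consensus matrices $B_k\in\mathbb{R}^{S\times S}$ have nonnegative entries. Iteration: given $x^J_{0,0}\in\mathcal{X}$ ($J=1,\dots,S$), for each $k\ge0$ and $i=1,\dots,\Delta$, $x^J_{i,k}=\mathcal{P}_{\mathcal{X}}\big[x^J_{i-1,k}-\alpha_k\sum_{h=1}^C W_{i-1,k}[J,h]\,g_h(x^J_{i-1,k})\big]$, and then $x^I_{0,k+1}=\sum_{J=1}^S B_k[I,J]\,x^J_{\Delta,k}$. A square matrix $B$ is scrambling if for every two rows $I,G$ there is a column $J$ with $B[I,J]>0$ and $B[G,J]>0$. *)

(* Defs.v *)
From Stdlib Require Import Reals Lra.
Open Scope R_scope.

(* Vectors of R^D are encoded as functions nat -> R; only coordinates
   0..D-1 are meaningful (norms, inner products, distances only read them). *)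
Definition vec := nat -> R.

Fixpoint vsum (n : nat) (f : nat -> R) : R :=
  match n with O => 0 | S m => vsum m f + f m end.

(* vmax n f = max (f 0, ..., f (n-1)), and 0 for n = 0 *)
Fixpoint vmax (n : nat) (f : nat -> R) : R :=
  match n with O => 0 | S O => f O | S m => Rmax (vmax m f) (f m) end.

Definition vdot (D : nat) (x y : vec) : R := vsum D (fun d => x d * y d).
Definition vnorm (D : nat) (x : vec) : R := sqrt (vdot D x x).
Definition vsub (x y : vec) : vec := fun d => x d - y d.
Definition vdist (D : nat) (x y : vec) : R := vnorm D (vsub x y).

(* X is a subset of R^D: only vectors vanishing beyond coordinate D *)
Definition in_RD (D : nat) (X : vec -> Prop) : Prop :=
  forall x, X x -> forall d, (D <= d)%nat -> x d = 0.

Definition convex_set (X : vec -> Prop) : Prop :=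
  forall x y t, X x -> X y -> 0 <= t <= 1 ->
    X (fun d => t * x d + (1 - t) * y d).

Definition closed_set (D : nat) (X : vec -> Prop) : Prop :=
  forall x, (forall d, (D <= d)%nat -> x d = 0) ->
    (forall eps, 0 < eps -> exists y, X y /\ vdist D x y < eps) -> X x.

Definition bounded_set (D : nat) (X : vec -> Prop) : Prop :=
  exists r, forall x, X x -> vnorm D x <= r.

(* compact subset of R^D (Heine-Borel) *)
Definition compact_set (D : nat) (X : vec -> Prop) : Prop :=
  in_RD D X /\ closed_set D X /\ bounded_set D X.

Definition is_projection (D : nat) (X : vec -> Prop) (P : vec -> vec) : Prop :=
  forall x, X (P x) /\ forall y, X y -> vdist D x (P x) <= vdist D x y.

Definition convex_fun (f : vec -> R) : Prop :=
  forall x y t, 0 <= t <= 1 ->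
    f (fun d => t * x d + (1 - t) * y d) <= t * f x + (1 - t) * f y.

Definition has_gradient (D : nat) (f : vec -> R) (g : vec -> vec) : Prop :=
  forall x eps, 0 < eps -> exists delta, 0 < delta /\
    forall y, vdist D y x < delta ->
      Rabs (f y - f x - vdot D (g x) (vsub y x)) <= eps * vdist D y x.

Definition continuous_vfun (D : nat) (g : vec -> vec) : Prop :=
  forall x eps, 0 < eps -> exists delta, 0 < delta /\
    forall y, vdist D y x < delta -> vdist D (g y) (g x) < eps.

(* The iteration.  W i k J h = W_{i,k}[J,h] (0-based server / client indices),
   B k I J = B_k[I,J]; g h = gradient of f_h. *)
Fixpoint x_inner (P : vec -> vec) (W : nat -> nat -> nat -> nat -> R)
  (g : nat -> vec -> vec) (alpha : nat -> R) (C : nat)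
  (y : nat -> vec) (k i : nat) : nat -> vec :=
  match i with
  | O => y
  | S i' => fun J =>
      P (fun d => x_inner P W g alpha C y k i' J d
         - alpha k * vsum C (fun h => W i' k J h * g h (x_inner P W g alpha C y k i' J) d))
  end.

(* x_iter ... k J = x^J_{0,k} *)
Fixpoint x_iter (P : vec -> vec) (W : nat -> nat -> nat -> nat -> R)
  (g : nat -> vec -> vec) (alpha : nat -> R) (B : nat -> nat -> nat -> R)
  (S C Delta : nat) (x0 : nat -> vec) (k : nat) : nat -> vec :=
  match k with
  | O => x0
  | Datatypes.S k' => fun I d =>
      vsum S (fun J => B k' I J *
        x_inner P W g alpha C (x_iter P W g alpha B S C Delta x0 k') k' Delta J d)
  end.

Definition deviation (S : nat) (xs : nat -> vec) (J : nat) : vec :=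
  fun d => xs J d - / INR S * vsum S (fun I => xs I d).

Definition scrambling (S : nat) (B : nat -> nat -> R) : Prop :=
  forall I G, (I < S)%nat -> (G < S)%nat ->
    exists J, (J < S)%nat /\ 0 < B I J /\ 0 < B G J.

(* Main.v *)
Require Import Defs.
From Stdlib Require Import Reals Lra Lia Psatz FunctionalExtensionality.
Open Scope R_scope.

Lemma vsum_ext n f g : (forall j, (j < n)%nat -> f j = g j) -> vsum n f = vsum n g.
Proof. induction n; intros H; simpl; auto. rewrite IHn by (intros; apply H; lia). rewrite (H n) by lia; auto. Qed.
Lemma vsum_le n f g : (forall j, (j<n)%nat -> f j <= g j) -> vsum n f <= vsum n g.
Proof. induction n; intros H; simpl; [lra|]. assert (vsum n f <= vsum n g) by (apply IHn; intros; apply H; lia). specialize (H n ltac:(lia)). lra. Qed.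
Lemma vsum_plus n f g : vsum n (fun j => f j + g j) = vsum n f + vsum n g.
Proof. induction n; simpl; [lra|]. rewrite IHn; lra. Qed.
Lemma vsum_scal n c f : vsum n (fun j => c * f j) = c * vsum n f.
Proof. induction n; simpl; [lra|]. rewrite IHn; lra. Qed.
Lemma vsum_const n c : vsum n (fun _ => c) = INR n * c.
Proof. induction n; simpl vsum; [simpl; lra|]. rewrite IHn, S_INR; lra. Qed.
Lemma vsum_nonneg n f : (forall j, (j<n)%nat -> 0 <= f j) -> 0 <= vsum n f.
Proof. induction n; intros H; simpl; [lra|]. assert (0 <= vsum n f) by (apply IHn; intros; apply H; lia). specialize (H n ltac:(lia)). lra. Qed.
Lemma vsum_single n f j : (forall j, (j<n)%nat -> 0 <= f j) -> (j<n)%nat -> f j <= vsum n f.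
Proof. induction n; intros H Hj; simpl; [lia|].
  assert (0 <= vsum n f) by (apply vsum_nonneg; intros; apply H; lia).
  destruct (Nat.eq_dec j n). subst; lra.
  assert (f j <= vsum n f) by (apply IHn; [intros; apply H; lia|lia]). specialize (H n ltac:(lia)). lra. Qed.
Lemma vsum_single_nonpos n f j : (forall j, (j<n)%nat -> f j <= 0) -> (j<n)%nat -> vsum n f <= f j.
Proof. intros H Hj. assert (- f j <= vsum n (fun i => - f i)).
  apply (vsum_single n (fun i => - f i)); auto. intros; specialize (H j0 H0); lra.
  rewrite <- (vsum_ext n (fun i => (-1) * f i)) in H0 by (intros; ring). rewrite vsum_scal in H0. lra. Qed.
Lemma vsum_abs n f : Rabs (vsum n f) <= vsum n (fun j => Rabs (f j)).
Proof. induction n; simpl. rewrite Rabs_R0; lra. eapply Rle_trans. apply Rabs_triang. lra. Qed.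
Lemma vsum_zero n f : (forall j, (j<n)%nat -> 0 <= f j) -> vsum n f = 0 -> forall j, (j<n)%nat -> f j = 0.
Proof. intros H H0 j Hj. pose proof (vsum_single n f j H Hj). pose proof (H j Hj). lra. Qed.

Lemma vmax_ge n f j : (j < n)%nat -> f j <= vmax n f.
Proof. induction n; intros Hj; [lia|]. destruct n. assert (j = 0%nat) by lia; subst; simpl; lra.
  change (vmax (S (S n)) f) with (Rmax (vmax (S n) f) (f (S n))).
  destruct (Nat.eq_dec j (S n)). subst; apply Rmax_r. eapply Rle_trans; [apply IHn; lia|apply Rmax_l]. Qed.
Lemma vmax_le n f c : (1 <= n)%nat -> (forall j, (j<n)%nat -> f j <= c) -> vmax n f <= c.
Proof. induction n; intros Hn H; [lia|]. destruct n. simpl; apply H; lia.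
  change (vmax (S (S n)) f) with (Rmax (vmax (S n) f) (f (S n))).
  apply Rmax_lub. apply IHn; [lia|intros; apply H; lia]. apply H; lia. Qed.
Lemma vmax_attain n f : (1<=n)%nat -> exists j, (j<n)%nat /\ vmax n f = f j.
Proof. induction n; intros Hn; [lia|]. destruct n. exists 0%nat; simpl; split; auto.
  change (vmax (S (S n)) f) with (Rmax (vmax (S n) f) (f (S n))).
  destruct (IHn ltac:(lia)) as [j [Hj E]]. unfold Rmax; destruct (Rle_dec (vmax (S n) f) (f (S n))).
  exists (S n); split; auto. exists j; split; auto. Qed.

Definition vmin n f := - vmax n (fun j => - f j).
Lemma vmin_le n f j : (j < n)%nat -> vmin n f <= f j.
Proof. intros; unfold vmin. pose proof (vmax_ge n (fun j => - f j) j H). lra. Qed.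
Lemma vmin_ge n f c : (1 <= n)%nat -> (forall j, (j<n)%nat -> c <= f j) -> c <= vmin n f.
Proof. intros; unfold vmin. assert (vmax n (fun j => - f j) <= - c). apply vmax_le; auto.
  intros; specialize (H0 j H1); lra. lra. Qed.
Lemma vmin_attain n f : (1<=n)%nat -> exists j, (j<n)%nat /\ vmin n f = f j.
Proof. intros. destruct (vmax_attain n (fun j => - f j) H) as [j [Hj E]]. exists j; split; auto.
  unfold vmin; rewrite E; ring. Qed.
Lemma range_nonneg n f : (1 <= n)%nat -> 0 <= vmax n f - vmin n f.
Proof. intros. pose proof (vmax_ge n f 0 ltac:(lia)). pose proof (vmin_le n f 0 ltac:(lia)). lra. Qed.

Lemma range_pert n u v e : (1 <= n)%nat -> (forall j, (j<n)%nat -> Rabs (u j - v j) <= e) ->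
  vmax n u - vmin n u <= vmax n v - vmin n v + 2 * e.
Proof. intros Hn H.
  assert (vmax n u <= vmax n v + e). apply vmax_le; auto. intros. specialize (H j H0).
    pose proof (vmax_ge n v j H0). pose proof (Rle_abs (u j - v j)); pose proof (Rle_abs (-(u j - v j))); rewrite Rabs_Ropp in *; lra.
  assert (vmin n v - e <= vmin n u). apply vmin_ge; auto. intros. specialize (H j H1).
    pose proof (vmin_le n v j H1). pose proof (Rle_abs (u j - v j)); pose proof (Rle_abs (-(u j - v j))); rewrite Rabs_Ropp in *; lra.
  lra. Qed.

Lemma sumsq_le n v : vsum n (fun d => v d * v d) <= vsum n (fun d => Rabs (v d)) * vsum n (fun d => Rabs (v d)).
Proof. induction n; simpl; [lra|].
  assert (0 <= vsum n (fun d => Rabs (v d))) by (apply vsum_nonneg; intros; apply Rabs_pos).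
  pose proof (Rabs_pos (v n)). assert (Rabs (v n) * Rabs (v n) = v n * v n).
  rewrite <- Rabs_mult. apply Rabs_right. nra. nra. Qed.
Lemma vnorm_le_l1 D v : vnorm D v <= vsum D (fun d => Rabs (v d)).
Proof. unfold vnorm, vdot. assert (0 <= vsum D (fun d => Rabs (v d))) by (apply vsum_nonneg; intros; apply Rabs_pos).
  rewrite <- (sqrt_square (vsum D (fun d => Rabs (v d)))) by auto. apply sqrt_le_1_alt. apply sumsq_le. Qed.
Lemma coord_le_vnorm D v d : (d < D)%nat -> Rabs (v d) <= vnorm D v.
Proof. intros. unfold vnorm, vdot. rewrite <- sqrt_Rsqr_abs. apply sqrt_le_1_alt. unfold Rsqr.
  apply (vsum_single D (fun d => v d * v d)); auto. intros; nra. Qed.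
Lemma vnorm_nonneg D v : 0 <= vnorm D v.
Proof. apply sqrt_pos. Qed.

Lemma convex_comb (X : vec -> Prop) (HX : convex_set X) n (b : nat -> R) (y : nat -> vec) :
  (forall j, (j<n)%nat -> 0 <= b j) -> (forall j, (j<n)%nat -> X (y j)) -> 0 < vsum n b ->
  X (fun d => vsum n (fun j => b j * y j d) / vsum n b).
Proof. induction n; intros Hb Hy Hs; simpl in Hs; [lra|].
  assert (Hs0 : 0 <= vsum n b) by (apply vsum_nonneg; intros; apply Hb; lia).
  assert (Hbn : 0 <= b n) by (apply Hb; lia).
  destruct (Req_dec (vsum n b) 0) as [E|E].
  - assert (Z : forall j, (j<n)%nat -> b j = 0) by (apply vsum_zero; auto; intros; apply Hb; lia).
    assert (forall d, vsum n (fun j => b j * y j d) = 0).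
    { intros d. rewrite (vsum_ext n _ (fun j => 0 * 0)). rewrite vsum_scal; ring. intros; rewrite Z; auto; ring. }
    replace (fun d => vsum (S n) (fun j => b j * y j d) / vsum (S n) b) with (y n). apply Hy; lia.
    apply functional_extensionality; intros d. simpl. rewrite H, E. field. lra.
  - assert (Xz : X (fun d => vsum n (fun j => b j * y j d) / vsum n b)). apply IHn; [intros; apply Hb; lia|intros; apply Hy; lia|destruct Hs0; auto; congruence].
    pose proof (HX _ (y n) (vsum n b / (vsum n b + b n)) Xz (Hy n ltac:(lia))).
    match type of H with _ -> X ?F => replace (fun d => vsum (S n) (fun j => b j * y j d) / vsum (S n) b) with F end.
    apply H. split. apply Rmult_le_pos; auto. left; apply Rinv_0_lt_compat; lra.
    apply Rmult_le_reg_r with (vsum n b + b n). lra. field_simplify; lra.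
    apply functional_extensionality; intros d. simpl. field. lra.
Qed.

Lemma contract_pair n (b : nat -> nat -> R) kappa (z : nat -> R) I G :
  (forall I J, (I<n)%nat -> (J<n)%nat -> 0 <= b I J) ->
  (forall I, (I<n)%nat -> vsum n (fun J => b I J) = 1) ->
  scrambling n b ->
  (forall I J, (I<n)%nat -> (J<n)%nat -> b I J = 0 \/ kappa <= b I J) ->
  (I < n)%nat -> (G < n)%nat ->
  vsum n (fun J => b I J * z J) - vsum n (fun J => b G J * z J)
   <= (1 - kappa) * (vmax n z - vmin n z).
Proof. intros Hnn Hrow Hscr Hk HI HG.
  destruct (Hscr I G HI HG) as [J0 [HJ0 [Ha Hb]]].
  assert (Ka : kappa <= b I J0) by (destruct (Hk I J0 HI HJ0); lra).
  assert (Kb : kappa <= b G J0) by (destruct (Hk G J0 HG HJ0); lra).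
  set (M := vmax n z). set (m := vmin n z).
  assert (E1 : vsum n (fun J => b I J * z J) = vsum n (fun J => b I J * (z J - M)) + M).
  { replace (vsum n (fun J => b I J * (z J - M)) + M) with (vsum n (fun J => b I J * (z J - M)) + M * vsum n (fun J => b I J)) by (rewrite (Hrow I HI); ring). rewrite <- vsum_scal, <- vsum_plus. apply vsum_ext; intros; ring. }
  assert (E2 : vsum n (fun J => b G J * z J) = vsum n (fun J => b G J * (z J - m)) + m).
  { replace (vsum n (fun J => b G J * (z J - m)) + m) with (vsum n (fun J => b G J * (z J - m)) + m * vsum n (fun J => b G J)) by (rewrite (Hrow G HG); ring). rewrite <- vsum_scal, <- vsum_plus. apply vsum_ext; intros; ring. }
  assert (L1 : vsum n (fun J => b I J * (z J - M)) <= b I J0 * (z J0 - M)).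
  { apply (vsum_single_nonpos n (fun J => b I J * (z J - M))); auto. intros j Hj.
    pose proof (vmax_ge n z j Hj). pose proof (Hnn I j HI Hj). fold M in H. nra. }
  assert (L2 : b G J0 * (z J0 - m) <= vsum n (fun J => b G J * (z J - m))).
  { apply (vsum_single n (fun J => b G J * (z J - m))); auto. intros j Hj.
    pose proof (vmin_le n z j Hj). pose proof (Hnn G j HG Hj). fold m in H. nra. }
  pose proof (vmax_ge n z J0 HJ0). pose proof (vmin_le n z J0 HJ0). fold M in H. fold m in H0.
  assert (kappa * (M - z J0) <= b I J0 * (M - z J0)) by (apply Rmult_le_compat_r; lra).
  assert (kappa * (z J0 - m) <= b G J0 * (z J0 - m)) by (apply Rmult_le_compat_r; lra).
  rewrite E1, E2. nra.
Qed.

Lemma contract n (b : nat -> nat -> R) kappa (z : nat -> R) :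
  (1 <= n)%nat ->
  (forall I J, (I<n)%nat -> (J<n)%nat -> 0 <= b I J) ->
  (forall I, (I<n)%nat -> vsum n (fun J => b I J) = 1) ->
  scrambling n b ->
  (forall I J, (I<n)%nat -> (J<n)%nat -> b I J = 0 \/ kappa <= b I J) ->
  vmax n (fun I => vsum n (fun J => b I J * z J)) - vmin n (fun I => vsum n (fun J => b I J * z J))
   <= (1 - kappa) * (vmax n z - vmin n z).
Proof. intros. destruct (vmax_attain n (fun I => vsum n (fun J => b I J * z J)) H) as [I [HI E1]].
  destruct (vmin_attain n (fun I => vsum n (fun J => b I J * z J)) H) as [G [HG E2]].
  rewrite E1, E2. apply contract_pair; auto. Qed.

Lemma mean_bounds n f : (1 <= n)%nat -> vmin n f <= / INR n * vsum n f <= vmax n f.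
Proof. intros. assert (0 < INR n) by (apply lt_0_INR; lia).
  assert (vsum n f <= INR n * vmax n f). rewrite <- vsum_const. apply vsum_le; intros; apply vmax_ge; auto.
  assert (INR n * vmin n f <= vsum n f). rewrite <- vsum_const. apply vsum_le; intros; apply vmin_le; auto.
  split. apply Rmult_le_reg_l with (INR n); auto. rewrite <- Rmult_assoc, Rinv_r by lra. lra.
  apply Rmult_le_reg_l with (INR n); auto. rewrite <- Rmult_assoc, Rinv_r by lra. lra. Qed.

Lemma proj_step D (X : vec -> Prop) P (x w : vec) a G0 d :
  is_projection D X P -> X x -> 0 <= a -> (forall d, (d<D)%nat -> Rabs (w d) <= G0) -> (d < D)%nat ->
  Rabs (P (fun d => x d - a * w d) d - x d) <= 2 * (a * (INR D * G0)).
Proof. intros HP Hx Ha Hw Hd. set (yv := fun d => x d - a * w d).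
  assert (N1 : vnorm D (vsub yv x) <= a * (INR D * G0)).
  { eapply Rle_trans. apply vnorm_le_l1. rewrite <- vsum_const, <- vsum_scal. apply vsum_le; intros j Hj.
    unfold vsub, yv. replace (x j - a * w j - x j) with (- (a * w j)) by ring. rewrite Rabs_Ropp, Rabs_mult, (Rabs_right a) by lra.
    apply Rmult_le_compat_l; auto. }
  destruct (HP yv) as [_ Hmin]. specialize (Hmin x Hx). unfold vdist in Hmin.
  assert (A1 : Rabs (vsub yv (P yv) d) <= vnorm D (vsub yv (P yv))) by (apply coord_le_vnorm; auto).
  assert (A2 : Rabs (vsub yv x d) <= vnorm D (vsub yv x)) by (apply coord_le_vnorm; auto).
  change (vsub yv (P yv) d) with (yv d - P yv d) in A1. change (vsub yv x d) with (yv d - x d) in A2. fold yv. replace (P yv d - x d) with (-(yv d - P yv d) + (yv d - x d)) by ring.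
  eapply Rle_trans. apply Rabs_triang. rewrite Rabs_Ropp. lra. Qed.

Lemma inner_bound D (X : vec -> Prop) P W g alpha C Delta n (y : nat -> vec) k G0 :
  is_projection D X P -> 0 <= alpha k ->
  (forall J, (J<n)%nat -> X (y J)) ->
  (forall i J z d, (i < Delta)%nat -> (J < n)%nat -> X z -> (d < D)%nat ->
     Rabs (vsum C (fun h => W i k J h * g h z d)) <= G0) ->
  forall i, (i <= Delta)%nat -> forall J, (J < n)%nat ->
    X (x_inner P W g alpha C y k i J) /\
    forall d, (d < D)%nat -> Rabs (x_inner P W g alpha C y k i J d - y J d) <= INR i * (2 * (alpha k * (INR D * G0))).
Proof. intros HP Ha Hy Hw. induction i; intros Hi J HJ.
  - simpl. split; auto. intros. replace (y J d - y J d) with 0 by ring. rewrite Rabs_R0; lra.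
  - destruct (IHi ltac:(lia) J HJ) as [HX Hb]. split.
    + simpl. apply (proj1 (HP _)).
    + intros d Hd. cbn [x_inner]. 
      pose proof (proj_step D X P (x_inner P W g alpha C y k i J)
        (fun d => vsum C (fun h => W i k J h * g h (x_inner P W g alpha C y k i J) d)) (alpha k) G0 d HP HX Ha
        (fun d' Hd' => Hw i J _ d' ltac:(lia) HJ HX Hd') Hd).
      specialize (Hb d Hd). rewrite S_INR.
      replace (P (fun d0 => x_inner P W g alpha C y k i J d0 - alpha k * vsum C (fun h => W i k J h * g h (x_inner P W g alpha C y k i J) d0)) d - y J d)
        with ((P (fun d0 => x_inner P W g alpha C y k i J d0 - alpha k * vsum C (fun h => W i k J h * g h (x_inner P W g alpha C y k i J) d0)) d - x_inner P W g alpha C y k i J d) + (x_inner P W g alpha C y k i J d - y J d)) by ring.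
      eapply Rle_trans. apply Rabs_triang. lra.
Qed.
Theorem mainTheorem4
  (S C D Delta : nat) (HS : (1 <= S)%nat) (HC : (1 <= C)%nat)
  (HD : (1 <= D)%nat) (HDelta : (1 <= Delta)%nat)
  (X : vec -> Prop) (P : vec -> vec)
  (f : nat -> vec -> R) (g : nat -> vec -> vec) (L N : nat -> R)
  (W : nat -> nat -> nat -> nat -> R) (B : nat -> nat -> nat -> R)
  (alpha : nat -> R) (x0 : nat -> vec) (kappa : R)
  (* standing assumptions *)
  (HXne : exists x, X x) (HXconv : convex_set X) (HXcomp : compact_set D X)
  (HP : is_projection D X P)
  (Hfconv : forall h, (h < C)%nat -> convex_fun (f h))
  (Hgrad : forall h, (h < C)%nat -> has_gradient D (f h) (g h))
  (Hgcont : forall h, (h < C)%nat -> continuous_vfun D (g h))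
  (HL : forall h x, (h < C)%nat -> X x -> vnorm D (g h x) <= L h)
  (HNpos : forall h, (h < C)%nat -> 0 < N h)
  (HN : forall h x y, (h < C)%nat -> X x -> X y ->
          vdist D (g h x) (g h y) <= N h * vdist D x y)
  (Hx0 : forall J, (J < S)%nat -> X (x0 J))
  (* SLC *)
  (HSLC : exists M, 0 < M /\ forall k h, (h < C)%nat ->
            vsum Delta (fun i => vsum S (fun J => W i k J h)) = M)
  (* BUC *)
  (HBUC : exists Mb, 0 < Mb /\ forall k h, (h < C)%nat ->
            vsum Delta (fun i => vsum S (fun J => Rabs (W i k J h))) <= Mb)
  (* consensus matrices *)
  (Hkappa : 0 < kappa)
  (HBnn : forall k I J, (I < S)%nat -> (J < S)%nat -> 0 <= B k I J)
  (HBrow : forall k I, (I < S)%nat -> vsum S (fun J => B k I J) = 1)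
  (HBcol : forall k J, (J < S)%nat -> vsum S (fun I => B k I J) = 1)
  (HBscr : forall k, scrambling S (B k))
  (HBkappa : forall k I J, (I < S)%nat -> (J < S)%nat ->
             B k I J = 0 \/ kappa <= B k I J)
  (* step sizes *)
  (Hapos : forall k, 0 < alpha k)
  (Hadec : forall k, alpha (Datatypes.S k) <= alpha k)
  (Hadiv : cv_infty (fun n => sum_f_R0 alpha n))
  (Hasq : exists l, Un_cv (fun n => sum_f_R0 (fun k => alpha k ^ 2) n) l) :
  exists l, Un_cv (fun n => sum_f_R0 (fun k => alpha k *
      vmax S (fun J => vnorm D
        (deviation S (x_iter P W g alpha B S C Delta x0 k) J))) n) l.
Proof.
  destruct HBUC as [Mb [HMb HBUCb]].
  destruct HXne as [xe Hxe].
  assert (HLnn : forall h, (h<C)%nat -> 0 <= L h) by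
    (intros; eapply Rle_trans; [apply vnorm_nonneg| apply (HL h xe H Hxe)]).
  set (G0 := vsum C (fun h => Mb * L h)).
  assert (HG0 : 0 <= G0) by (apply vsum_nonneg; intros; apply Rmult_le_pos; [lra|auto]).
  assert (HW1 : forall i k J h, (i<Delta)%nat -> (J<S)%nat -> (h<C)%nat -> Rabs (W i k J h) <= Mb).
  { intros. eapply Rle_trans; [|apply (HBUCb k h H1)].
    eapply Rle_trans; [| apply (vsum_single Delta (fun i => vsum S (fun J => Rabs (W i k J h))) i)].
    apply (vsum_single S (fun J => Rabs (W i k J h)) J); auto. intros; apply Rabs_pos.
    intros; apply vsum_nonneg; intros; apply Rabs_pos. auto. }
  assert (Hwb : forall k i J z d, (i<Delta)%nat -> (J<S)%nat -> X z -> (d<D)%nat ->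
      Rabs (vsum C (fun h => W i k J h * g h z d)) <= G0).
  { intros. eapply Rle_trans. apply vsum_abs. apply vsum_le. intros h Hh. rewrite Rabs_mult.
    apply Rmult_le_compat; try apply Rabs_pos. apply HW1; auto.
    eapply Rle_trans. apply (coord_le_vnorm D (g h z) d H2). apply HL; auto. }
  set (xi := x_iter P W g alpha B S C Delta x0).
  assert (Hxi_succ : forall k, xi (Datatypes.S k) = fun I d => vsum S (fun J => B k I J * x_inner P W g alpha C (xi k) k Delta J d)) by reflexivity.
  assert (HinX : forall k J, (J<S)%nat -> X (xi k J)).
  { induction k; intros J HJ. apply Hx0; auto.
    assert (Hin := inner_bound D X P W g alpha C Delta S (xi k) k G0 HP (Rlt_le _ _ (Hapos k)) IHk (Hwb k)).
    assert (Hc := convex_comb X HXconv S (fun J' => B k J J') (fun J' => x_inner P W g alpha C (xi k) k Delta J')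
       (fun j Hj => HBnn k J j HJ Hj) (fun j Hj => proj1 (Hin Delta (le_n _) j Hj))
       ltac:(rewrite (HBrow k J HJ); lra)).
    rewrite (HBrow k J HJ) in Hc. rewrite Hxi_succ. cbv beta.
    replace (fun d => vsum S (fun J0 => B k J J0 * x_inner P W g alpha C (xi k) k Delta J0 d)) with
      (fun d => vsum S (fun j => B k J j * x_inner P W g alpha C (xi k) k Delta j d) / 1). exact Hc.
    apply functional_extensionality; intros; field. }
  assert (Hk1 : kappa <= 1).
  { destruct (HBscr 0%nat 0%nat 0%nat ltac:(lia) ltac:(lia)) as [J [HJ [H1 _]]].
    destruct (HBkappa 0%nat 0%nat J ltac:(lia) HJ) as [H0|H0]. lra.
    pose proof (vsum_single S (B 0%nat 0%nat) J (fun j Hj => HBnn 0%nat 0%nat j ltac:(lia) Hj) HJ) as H2.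
    rewrite HBrow in H2 by lia. lra. }
  set (rng := fun k d => vmax S (fun J => xi k J d) - vmin S (fun J => xi k J d)).
  set (Rk := fun k => vsum D (rng k)).
  set (rho := 1 - kappa).
  assert (Hrng0 : forall k d, 0 <= rng k d) by (intros; apply range_nonneg; auto).
  assert (HRk0 : forall k, 0 <= Rk k) by (intros; apply vsum_nonneg; auto).
  assert (Hstep : forall k d, (d<D)%nat -> rng (Datatypes.S k) d <= rho * (rng k d + 2 * (INR Delta * (2*(alpha k*(INR D*G0)))))).
  { intros k d Hd. unfold rng. rewrite Hxi_succ. cbv beta.
    assert (Hin := inner_bound D X P W g alpha C Delta S (xi k) k G0 HP (Rlt_le _ _ (Hapos k)) (HinX k) (Hwb k)).
    eapply Rle_trans. apply (contract S (B k) kappa (fun J => x_inner P W g alpha C (xi k) k Delta J d)); auto.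
    unfold rho. apply Rmult_le_compat_l. lra. apply range_pert; auto.
    intros j Hj. apply (proj2 (Hin Delta (le_n _) j Hj) d Hd). }
  set (c0 := rho * (INR D * (2 * (INR Delta * (2 * (INR D * G0)))))).
  assert (Hc0 : 0 <= c0).
  { unfold c0, rho. pose proof (pos_INR D). pose proof (pos_INR Delta).
    apply Rmult_le_pos. lra. repeat (apply Rmult_le_pos; try lra). }
  assert (HRstep : forall k, Rk (Datatypes.S k) <= rho * Rk k + c0 * alpha k).
  { intros k. unfold Rk. eapply Rle_trans. apply vsum_le. exact (Hstep k).
    rewrite vsum_scal, vsum_plus, vsum_const. unfold c0. right; ring. }
  assert (HdevB : forall k J, (J<S)%nat -> vnorm D (deviation S (xi k) J) <= Rk k).
  { intros k J HJ. eapply Rle_trans. apply vnorm_le_l1. apply vsum_le. intros d Hd. unfold deviation, rng.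
    pose proof (mean_bounds S (fun I => xi k I d) HS). pose proof (vmax_ge S (fun I => xi k I d) J HJ).
    pose proof (vmin_le S (fun I => xi k I d) J HJ). apply Rabs_le. lra. }
  set (Tk := fun k => alpha k * vmax S (fun J => vnorm D (deviation S (xi k) J))).
  set (Ak := fun k => alpha k * Rk k).
  assert (HT : forall k, 0 <= Tk k <= Ak k).
  { intros k. unfold Tk, Ak. pose proof (Hapos k).
    pose proof (vmax_ge S (fun J => vnorm D (deviation S (xi k) J)) 0%nat ltac:(lia)).
    pose proof (vnorm_nonneg D (deviation S (xi k) 0%nat)).
    assert (vmax S (fun J => vnorm D (deviation S (xi k) J)) <= Rk k) by (apply vmax_le; auto).
    split. apply Rmult_le_pos; lra. apply Rmult_le_compat_l; lra. }
  assert (HA : forall k, Ak (Datatypes.S k) <= rho * Ak k + c0 * alpha k ^ 2).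
  { intros k. unfold Ak. pose proof (Hadec k). pose proof (Hapos k). pose proof (Hapos (Datatypes.S k)).
    pose proof (HRk0 (Datatypes.S k)). pose proof (HRstep k).
    assert (alpha (Datatypes.S k) * Rk (Datatypes.S k) <= alpha k * Rk (Datatypes.S k)) by (apply Rmult_le_compat_r; lra).
    assert (alpha k * Rk (Datatypes.S k) <= alpha k * (rho * Rk k + c0 * alpha k)) by (apply Rmult_le_compat_l; lra).
    nra. }
  destruct Hasq as [l Hl].
  assert (Hqg : Un_growing (fun n => sum_f_R0 (fun k => alpha k ^ 2) n)).
  { intros n. rewrite tech5. pose proof (pow2_ge_0 (alpha (Datatypes.S n))). lra. }
  pose proof (growing_ineq _ _ Hqg Hl) as Hql.
  assert (HA0 : forall k, 0 <= Ak k) by (intros k; pose proof (HT k); lra).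
  assert (Hrec : forall n, sum_f_R0 Ak (Datatypes.S n) <= Ak 0%nat + rho * sum_f_R0 Ak n + c0 * sum_f_R0 (fun k => alpha k ^ 2) n).
  { induction n. simpl. pose proof (HA 0%nat). lra.
    pose proof (tech5 Ak (Datatypes.S n)) as E1. pose proof (tech5 Ak n) as E2. pose proof (tech5 (fun k => alpha k ^ 2) n) as E3. cbv beta in E3. pose proof (HA (Datatypes.S n)). rewrite E1, E2, E3. rewrite E2 in IHn. assert (rho * (sum_f_R0 Ak n + Ak (Datatypes.S n)) = rho * sum_f_R0 Ak n + rho * Ak (Datatypes.S n)) as E4 by ring. assert (c0 * (sum_f_R0 (fun k => alpha k ^ 2) n + alpha (Datatypes.S n) ^ 2) = c0 * sum_f_R0 (fun k => alpha k ^ 2) n + c0 * alpha (Datatypes.S n) ^ 2) as E5 by ring. rewrite E4, E5. lra. }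
  assert (Hbd : forall n, sum_f_R0 Ak n <= (Ak 0%nat + c0 * l) / kappa).
  { intros n. pose proof (Hrec n). pose proof (tech5 Ak n). pose proof (HA0 (Datatypes.S n)).
    assert (rho * sum_f_R0 Ak n <= rho * sum_f_R0 Ak (Datatypes.S n)) by (apply Rmult_le_compat_l; unfold rho; lra).
    assert (c0 * sum_f_R0 (fun k => alpha k ^ 2) n <= c0 * l) by (apply Rmult_le_compat_l; auto).
    apply Rmult_le_reg_l with kappa; auto. replace (kappa * ((Ak 0%nat + c0 * l) / kappa)) with (Ak 0%nat + c0 * l) by (field; lra).
    unfold rho in *. nra. }
  assert (Hgrow : Un_growing (fun n => sum_f_R0 Tk n)).
  { intros n. rewrite tech5. pose proof (HT (Datatypes.S n)). lra. }
  assert (Hub : has_ub (fun n => sum_f_R0 Tk n)).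
  { exists ((Ak 0%nat + c0 * l) / kappa). intros x [i ->]. eapply Rle_trans; [|apply (Hbd i)].
    apply sum_Rle. intros; apply HT. }
  destruct (growing_cv _ Hgrow Hub) as [lim Hlim]. exists lim. exact Hlim.
Qed.
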